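(* Let $(\mathcal S,\mathcal A,P,R,d_0)$ be a finite episodic MDP with horizon $T$ and let $\pi_\theta$ be a policy differentiable in $\theta\in\mathbb R^n$, as described in the context. Then for every $\gamma\in[0,1]$, $$\nabla J(\theta)=\sum_{s\in\mathcal S} d^{\pi_\theta}_\gamma(s)\,\frac{\partial}{\partial\theta}V^{\pi_\theta}_\gamma(s)+\sum_{s\in\mathcal S}V^{\pi_\theta}_\gamma(s)\,\frac{\partial}{\partial\theta}d^{\pi_\theta}_\gamma(s).$$
   Context: Setting: $\mathcal S$ is a finite set of states, $\mathcal A$ a finite set of actions, $P(s'\mid s,a)$ a transition function, $R(\cdot\mid s,a,s')$ a reward distribution supported in $[-R_{\max},R_{\max}]$, and $d_0$ an initial state distribution. There is a special terminal absorbing state: once entered, the agent remains there and receives reward $0$. An episode runs as follows: $S_0\sim d_0$; at each time $t$, $A_t\sim\pi_\theta(\cdot\mid S_t)$, $S_{t+1}\sim P(\cdot\mid S_t,A_t)$, $R_t\sim R(\cdot\mid S_t,A_t,S_{t+1})$. The horizon $T$ is fixed and $S_T$ is the terminal absorbing state. The policy probabilities $\pi_\theta(a\mid s)$ are differentiable in $\theta\in\mathbb R^n$. All probabilities and expectations are under $\pi=\pi_\theta$. The objective is $J(\theta)=\mathbb E\big[\sum_{t=0}^{T-1}R_t\big]$. For $\gamma\in[0,1]$ (with $0^0=1$), $V^{\pi_\theta}_\gamma(s)=\mathbb E\big[\sum_{i=t}^{T}\gamma^{i-t}R_i\,\big|\,S_t=s\big]$, treated as a function of $s$ alone (the conditional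 expectation is assumed not to depend on $t$, e.g. because time is encoded in the state), with value $0$ at the terminal state. Define $d^{\pi_\theta}_\gamma(s)=d_0(s)+(1-\gamma)\sum_{t=1}^{T-1}\Pr(S_t=s)$. *)

(* Defs.v *)
From HB Require Import structures.
From mathcomp Require Import all_boot all_order all_algebra.
From mathcomp Require Import all_classical all_reals all_analysis.
Set Implicit Arguments. Unset Strict Implicit. Unset Printing Implicit Defensive.
Import Order.TTheory GRing.Theory Num.Theory.
Import numFieldNormedType.Exports.
Local Open Scope ring_scope.

Section EpisodicMDP.
Variables (R : realType) (S A : finType) (T : nat).

(* A trajectory of an episode: states S_0,...,S_T and actions A_0,...,A_{T-1}. *)
Definition states := {ffun 'I_T.+1 -> S}.
Definition actions := {ffun 'I_T -> A}.

(* S_t and S_{t+1} for t < T *)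
Definition st (xs : states) (t : 'I_T) : S := xs (widen_ord (leqnSn T) t).
Definition nxt (xs : states) (t : 'I_T) : S := xs (lift ord0 t).

Variables (d0 : S -> R) (P : S -> A -> S -> R) (r : S -> A -> S -> R)
  (pi : S -> A -> R).

Definition traj_prob (xs : states) (us : actions) : R :=
  d0 (xs ord0) * \prod_(t < T) (pi (st xs t) (us t) * P (st xs t) (us t) (nxt xs t)).

Definition Exp (f : states -> actions -> R) : R :=
  \sum_(xs : states) \sum_(us : actions) traj_prob xs us * f xs us.

Definition rew (xs : states) (us : actions) (t : 'I_T) : R :=
  r (st xs t) (us t) (nxt xs t).

Definition Jobj : R := Exp (fun xs us => \sum_(t < T) rew xs us t).

Definition Prob_state (t : 'I_T.+1) (s : S) : R :=
  Exp (fun xs _ => if xs t == s then 1 else 0).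

(* discounted return from time t: sum_{i=t}^{T} gamma^(i-t) R_i  (R_T = 0) *)
Definition ret_from (gamma : R) (t : nat) (xs : states) (us : actions) : R :=
  \sum_(i < T | (t <= i)%N) gamma ^+ (i - t) * rew xs us i.

Definition d_gamma (gamma : R) (s : S) : R :=
  d0 s + (1 - gamma) * \sum_(t < T.+1 | (1 <= t < T)%N) Prob_state t s.

End EpisodicMDP.

Arguments traj_prob {R S A} T d0 P pi xs us.
Arguments Exp {R S A} T d0 P pi f.
Arguments rew {R S A} T r xs us t.
Arguments Jobj {R S A} T d0 P r pi.
Arguments Prob_state {R S A} T d0 P pi t s.
Arguments ret_from {R S A} T r gamma t xs us.
Arguments d_gamma {R S A} T d0 P pi gamma s.

(* Main.v *)
Require Import Defs.
From HB Require Import structures.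
From mathcomp Require Import all_boot all_order all_algebra.
From mathcomp Require Import all_classical all_reals all_analysis.
From mathcomp Require Import zify ring lra.
Import Order.TTheory GRing.Theory Num.Theory.
Import numFieldNormedType.Exports.
Local Open Scope ring_scope.

Module Helpers.
Set Implicit Arguments. Unset Strict Implicit. Unset Printing Implicit Defensive.

Section Comb.
Variable R : realType.

Definition extf (m : nat) (X : finType) (g : {ffun 'I_m -> X}) (x : X)
  : {ffun 'I_m.+1 -> X} :=
  [ffun i : 'I_m.+1 => if unlift (@ord_max m) i is Some j then g j else x].

Lemma extf_last m (X : finType) (g : {ffun 'I_m -> X}) x : extf g x ord_max = x.
Proof. by rewrite ffunE unlift_none. Qed.

Lemma extf_widen m (X : finType) (g : {ffun 'I_m -> X}) x j :
  extf g x (widen_ord (leqnSn m) j) = g j.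
Proof.
have -> : widen_ord (leqnSn m) j = lift ord_max j by apply: ord_inj; rewrite lift_max.
by rewrite ffunE liftK.
Qed.

Lemma sum_split m (X : finType) (F : {ffun 'I_m.+1 -> X} -> R) :
  \sum_(f : {ffun 'I_m.+1 -> X}) F f
  = \sum_(g : {ffun 'I_m -> X}) \sum_(x : X) F (extf g x).
Proof.
rewrite pair_big /=.
pose h := fun p : {ffun 'I_m -> X} * X => extf p.1 p.2.
pose hi := fun f : {ffun 'I_m.+1 -> X} =>
  ([ffun j => f (widen_ord (leqnSn m) j)], f ord_max).
have c1 : cancel h hi.
  case=> g x; rewrite /h /hi /= extf_last; congr (_, _).
  by apply/ffunP => j; rewrite ffunE extf_widen.
have c2 : cancel hi h.
  move=> f; rewrite /h /hi /=; apply/ffunP => i; rewrite ffunE.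
  case: unliftP => [j ->|->] //.
  rewrite ffunE; congr (f _); apply: ord_inj; by rewrite lift_max.
rewrite (reindex h (onW_bij _ (Bijective c1 c2))) /=.
by apply: eq_bigr => -[g x].
Qed.

End Comb.

Lemma marg (R : realType) (S A : finType) (d0 : S -> R) (P : S -> A -> S -> R) (pi : S -> A -> R)
  (hpi : forall s, \sum_a pi s a = 1) (hP : forall s a, \sum_s' P s a s' = 1)
  (T : nat) (h : S -> R) :
  \sum_(xs : states S T) \sum_(us : actions A T)
     h (xs ord0) * \prod_(t < T) (pi (st xs t) (us t) * P (st xs t) (us t) (nxt xs t))
  = \sum_s h s.
Proof.
elim: T h => [|T IH] h.
  rewrite sum_split.
  under eq_bigr do under eq_bigr do under eq_bigr do rewrite big_ord0 mulr1.
  have E : forall (g : {ffun 'I_0 -> S}) (x : S), (extf g x) ord0 = x.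
    by move=> g x; rewrite (_ : ord0 = ord_max) ?extf_last //; apply: val_inj.
  under eq_bigr do under eq_bigr do under eq_bigr do rewrite E.
  under eq_bigr do under eq_bigr do rewrite sumr_const card_ffun card_ord expn0.
  by rewrite sumr_const card_ffun card_ord expn0.
rewrite sum_split.
transitivity (\sum_(g : states S T) \sum_(w : actions A T)
   h (g ord0) * \prod_(t < T) (pi (st g t) (w t) * P (st g t) (w t) (nxt g t))); last by apply: IH.
apply: eq_bigr => g _.
rewrite exchange_big /= sum_split; apply: eq_bigr => w _.
have E1 : forall y (t : 'I_T), st (extf g y) (widen_ord (leqnSn T) t) = st g t.
  by move=> y t; rewrite /st extf_widen.
have E2 : forall y (t : 'I_T), nxt (extf g y) (widen_ord (leqnSn T) t) = nxt g t.
  move=> y t; rewrite /nxt.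
  have -> : lift ord0 (widen_ord (leqnSn T) t) = widen_ord (leqnSn T.+1) (lift ord0 t).
    by apply: val_inj.
  by rewrite extf_widen.
have E3 : forall u (t : 'I_T), (extf w u) (widen_ord (leqnSn T) t) = w t.
  by move=> u t; rewrite extf_widen.
have E4 : forall y, (extf g y) ord0 = g ord0.
  by move=> y; rewrite (_ : ord0 = widen_ord (leqnSn T.+1) ord0) ?extf_widen //; apply: val_inj.
have E5 : forall y, st (extf g y) ord_max = g ord_max.
  by move=> y; rewrite /st extf_widen.
have E6 : forall y, nxt (extf g y) ord_max = y.
  by move=> y; rewrite /nxt (_ : lift _ _ = ord_max) ?extf_last //; apply: val_inj.
under [X in X = _]eq_bigr => u _.
  under eq_bigr => y _.
    rewrite big_ord_recr /= E4 E5 E6 extf_last.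
    under eq_bigr => t _ do rewrite E1 E2 E3.
    rewrite mulrA.
    over.
  rewrite /= -!big_distrr /= hP mulr1.
  over.
by rewrite /= -big_distrr /= hpi mulr1.
Qed.

Section Alg.
Variables (R : realType) (S A : finType) (T : nat)
  (d0 : S -> R) (P : S -> A -> S -> R) (r : S -> A -> S -> R) (pi : S -> A -> R)
  (gamma : R).

Lemma geom_nat (i : nat) : gamma ^+ i + (1 - gamma) * \sum_(0 <= k < i) gamma ^+ k = 1.
Proof.
elim: i => [|i IH]; first by rewrite big_geq // mulr0 expr0 addr0.
rewrite big_nat_recr //= mulrDr exprS.
rewrite -{3}IH; ring.
Qed.

Lemma geom (i : 'I_T) :
  gamma ^+ i + (1 - gamma) * \sum_(t < T.+1 | (1 <= t < T)%N && (t <= i)%N) gamma ^+ (i - t) = 1.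
Proof.
have -> : \sum_(t < T.+1 | (1 <= t < T)%N && (t <= i)%N) gamma ^+ (i - t)
        = \sum_(0 <= k < i) gamma ^+ k.
  rewrite -(big_mkord (fun t => (1 <= t < T)%N && (t <= i)%N) (fun t => gamma ^+ (i - t))).
  rewrite (eq_bigl (fun t => (1 <= t)%N && (t < i.+1)%N)); last first.
    move=> t /=; have := ltn_ord i; move=> hi; apply/idP/idP; lia.
  rewrite -(big_nat_widen 0 i.+1 T.+1 (fun t => (1 <= t)%N)); last by have := ltn_ord i; lia.
  rewrite big_mkcond big_nat_recl //= add0r.
  rewrite [RHS]big_nat_rev; apply: eq_bigr => t _ /=.
  by rewrite add0n.
exact: geom_nat.
Qed.

Lemma ret_id (xs : states S T) (us : actions A T) :
  \sum_(i < T) rew T r xs us i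
  = ret_from T r gamma 0 xs us
    + (1 - gamma) * \sum_(t < T.+1 | (1 <= t < T)%N) ret_from T r gamma t xs us.
Proof.
rewrite /ret_from.
under [X in _ = _ + _ * X]eq_bigr => t _ do rewrite big_mkcond.
rewrite exchange_big /=.
under [X in _ = _ + _ * X]eq_bigr => i _ do rewrite -big_mkcondr -mulr_suml.
rewrite (eq_bigl xpredT) //.
rewrite big_distrr -big_split /=; apply: eq_bigr => i _.
by rewrite subn0 mulrA -mulrDl geom mul1r.
Qed.

Lemma Exp_ext f g : (forall xs us, f xs us = g xs us) -> Exp T d0 P pi f = Exp T d0 P pi g.
Proof. by move=> h; apply: eq_bigr => xs _; apply: eq_bigr => us _; rewrite h. Qed.

Lemma Exp_sum (I : finType) (Q : pred I) (F : I -> states S T -> actions A T -> R) :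
  Exp T d0 P pi (fun xs us => \sum_(i | Q i) F i xs us) = \sum_(i | Q i) Exp T d0 P pi (F i).
Proof.
rewrite /Exp.
under eq_bigr do under eq_bigr do rewrite mulr_sumr.
under eq_bigr do rewrite exchange_big.
by rewrite exchange_big.
Qed.

Lemma Exp_add f g :
  Exp T d0 P pi (fun xs us => f xs us + g xs us) = Exp T d0 P pi f + Exp T d0 P pi g.
Proof.
rewrite /Exp -big_split; apply: eq_bigr => xs _.
by rewrite -big_split; apply: eq_bigr => us _; rewrite mulrDr.
Qed.

Lemma Exp_scale c f :
  Exp T d0 P pi (fun xs us => c * f xs us) = c * Exp T d0 P pi f.
Proof.
rewrite /Exp big_distrr; apply: eq_bigr => xs _.
by rewrite big_distrr; apply: eq_bigr => us _; rewrite /=; ring.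
Qed.

Hypothesis hpi : forall s, \sum_a pi s a = 1.
Hypothesis hP : forall s a, \sum_s' P s a s' = 1.

Lemma Prob0 s : Prob_state T d0 P pi ord0 s = d0 s.
Proof.
rewrite /Prob_state /Exp /traj_prob.
transitivity (\sum_(xs : states S T) \sum_(us : actions A T)
     (fun x => d0 x * (if x == s then 1 else 0)) (xs ord0) *
      \prod_(t < T) (pi (st xs t) (us t) * P (st xs t) (us t) (nxt xs t))).
  by apply: eq_bigr => xs _; apply: eq_bigr => us _ /=; ring.
rewrite (@marg R S A d0 P pi hpi hP T (fun x => d0 x * (if x == s then 1 else 0))) (bigD1 s) //= eqxx mulr1 big1 ?addr0 // => x /negbTE ->.
by rewrite mulr0.
Qed.

Lemma J_eq (V : S -> R)
  (HV : forall (t : 'I_T.+1) s, Prob_state T d0 P pi t s * V s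
     = Exp T d0 P pi (fun xs us => (if xs t == s then 1 else 0) * ret_from T r gamma t xs us)) :
  Jobj T d0 P r pi = \sum_s d_gamma T d0 P pi gamma s * V s.
Proof.
rewrite /d_gamma.
under eq_bigr do rewrite mulrDl -mulrA mulr_suml.
rewrite big_split /= -big_distrr /= exchange_big /=.
under eq_bigr => s _ do rewrite -(Prob0 s) HV.
under [X in _ = _ + _ * X]eq_bigr => t _ do (under eq_bigr => s _ do rewrite HV).
have K : forall t : 'I_T.+1, \sum_s Exp T d0 P pi
      (fun xs us => (if xs t == s then 1 else 0) * ret_from T r gamma t xs us)
    = Exp T d0 P pi (ret_from T r gamma t).
  move=> t; rewrite -Exp_sum; apply: Exp_ext => xs us.
  rewrite -mulr_suml (bigD1 (xs t)) //= eqxx big1 ?addr0 ?mul1r // => x.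
  by rewrite eq_sym => /negbTE ->.
rewrite K.
under [X in _ = _ + _ * X]eq_bigr => t _ do rewrite K.
rewrite -Exp_sum -Exp_scale -Exp_add /Jobj; apply: Exp_ext => xs us.
exact: ret_id.
Qed.
End Alg.

Section D.
Variables (R : realType) (n : nat).
Notation V := 'rV[R]_n.

Lemma xd_cst (c : R) (x : V) : differentiable (fun _ : V => c) x.
Proof. exact: differentiable_cst. Qed.

Lemma xd_add (f g : V -> R) x : differentiable f x -> differentiable g x ->
  differentiable (fun y => f y + g y) x.
Proof. by move=> hf hg; exact: (differentiableD hf hg). Qed.

Lemma xd_mul (f g : V -> R) x : differentiable f x -> differentiable g x ->
  differentiable (fun y => f y * g y) x.
Proof. by move=> hf hg; exact: (differentiableM hf hg). Qed.

Lemma xd_mul_eq (f g : V -> R) x v : differentiable f x -> differentiable g x ->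
  'd (fun y => f y * g y) x v = f x * 'd g x v + g x * 'd f x v.
Proof.
move=> hf hg; have -> : (fun y => f y * g y) = f * g by [].
by rewrite diffM.
Qed.

Lemma xd_sum_seq (I : Type) (rr : seq I) (Q : pred I) (F : I -> V -> R) x :
  (forall i, differentiable (F i) x) ->
  differentiable (fun y => \sum_(i <- rr | Q i) F i y) x /\
  forall v, 'd (fun y => \sum_(i <- rr | Q i) F i y) x v = \sum_(i <- rr | Q i) 'd (F i) x v.
Proof.
move=> hF; elim: rr => [|i rr [IH1 IH2]].
  have -> : (fun y => \sum_(i <- [::] | Q i) F i y) = cst 0.
    by apply/funext => y; rewrite big_nil.
  by split; [exact: differentiable_cst | move=> v; rewrite diff_cst big_nil].
case: (boolP (Q i)) => Qi.
  have -> : (fun y => \sum_(j <- i :: rr | Q j) F j y)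
          = F i + (fun y => \sum_(j <- rr | Q j) F j y).
    by apply/funext => y; rewrite big_cons Qi.
  split; first exact: differentiableD.
  by move=> v; rewrite diffD // big_cons Qi /= IH2.
have -> : (fun y => \sum_(j <- i :: rr | Q j) F j y)
        = (fun y => \sum_(j <- rr | Q j) F j y).
  by apply/funext => y; rewrite big_cons (negbTE Qi).
by split => // v; rewrite big_cons (negbTE Qi).
Qed.

Lemma xd_sum (I : Type) (rr : seq I) (Q : pred I) (F : I -> V -> R) x :
  (forall i, differentiable (F i) x) ->
  differentiable (fun y => \sum_(i <- rr | Q i) F i y) x.
Proof. by move=> h; case: (xd_sum_seq rr Q h). Qed.

Lemma xd_prod (I : Type) (rr : seq I) (Q : pred I) (F : I -> V -> R) x :
  (forall i, differentiable (F i) x) ->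
  differentiable (fun y => \prod_(i <- rr | Q i) F i y) x.
Proof.
move=> hF; elim: rr => [|i rr IH].
  have -> : (fun y => \prod_(i <- [::] | Q i) F i y) = cst 1.
    by apply/funext => y; rewrite big_nil.
  exact: differentiable_cst.
case: (boolP (Q i)) => Qi.
  have -> : (fun y => \prod_(j <- i :: rr | Q j) F j y)
          = F i * (fun y => \prod_(j <- rr | Q j) F j y).
    by apply/funext => y; rewrite big_cons Qi.
  exact: differentiableM.
have -> : (fun y => \prod_(j <- i :: rr | Q j) F j y)
        = (fun y => \prod_(j <- rr | Q j) F j y).
  by apply/funext => y; rewrite big_cons (negbTE Qi).
exact: IH.
Qed.
End D.

End Helpers.
Import Helpers.

Theorem corollary1 (R : realType) (S A : finType) (T n : nat)
  (d0 : S -> R) (P : S -> A -> S -> R) (r : S -> A -> S -> R) (Rmax : R)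
  (term : S) (pi : 'rV[R]_n -> S -> A -> R)
  (gamma : R) (V : 'rV[R]_n -> S -> R) (theta : 'rV[R]_n) :
  (forall s, 0 <= d0 s) -> \sum_s d0 s = 1 ->
  (forall s a s', 0 <= P s a s') -> (forall s a, \sum_s' P s a s' = 1) ->
  (forall s a s', `|r s a s'| <= Rmax) ->
  (forall a, P term a term = 1) -> (forall a s', r term a s' = 0) ->
  (forall th s a, 0 <= pi th s a) -> (forall th s, \sum_a pi th s a = 1) ->
  (forall th s a, differentiable (fun th' => pi th' s a) th) ->
  (forall th, Prob_state T d0 P (pi th) ord_max term = 1) ->
  (0 <= gamma <= 1) ->
  (forall th (t : 'I_T.+1) s,
     Prob_state T d0 P (pi th) t s * V th s
     = Exp T d0 P (pi th)
         (fun xs us => (if xs t == s then 1 else 0) * ret_from T r gamma t xs us)) ->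
  (forall th, V th term = 0) ->
  (forall th s, differentiable (fun th' => V th' s) th) ->
  differentiable (fun th => Jobj T d0 P r (pi th)) theta /\
  forall v : 'rV[R]_n,
    'd (fun th => Jobj T d0 P r (pi th)) theta v
    = \sum_s d_gamma T d0 P (pi theta) gamma s * 'd (fun th => V th s) theta v
      + \sum_s V theta s * 'd (fun th => d_gamma T d0 P (pi th) gamma s) theta v.
Proof.
move=> _ _ _ hP _ _ _ _ hpi dpi _ _ HV _ dV.
have HJ : (fun th => Jobj T d0 P r (pi th))
        = (fun th => \sum_s d_gamma T d0 P (pi th) gamma s * V th s).
  apply/funext => th; apply: J_eq => //; exact: HV.
have dd : forall s, differentiable (fun th => d_gamma T d0 P (pi th) gamma s) theta.
  move=> s; rewrite /d_gamma /Prob_state /Exp /traj_prob.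
  apply: xd_add; first exact: xd_cst.
  apply: xd_mul; first exact: xd_cst.
  apply: xd_sum => t; apply: xd_sum => xs; apply: xd_sum => us.
  apply: xd_mul; last exact: xd_cst.
  apply: xd_mul; first exact: xd_cst.
  apply: xd_prod => i; apply: xd_mul; [exact: dpi | exact: xd_cst].
have dprodf : forall s, differentiable
    (fun th => d_gamma T d0 P (pi th) gamma s * V th s) theta.
  by move=> s; apply: xd_mul.
rewrite HJ; split; first exact: xd_sum.
move=> v; rewrite (proj2 (xd_sum_seq _ _ dprodf)) -big_split /=.
by apply: eq_bigr => s _; rewrite xd_mul_eq.
Qed.
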